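(* Let $G = K_m \otimes K_n$ with $m \geq 3$ and $n \geq 2m-1$. Then $\dim(G) = n-1$.
   Context: $K_r$ is the complete graph on $r$ vertices. The tensor product $G\otimes H$ has vertex set $V(G)\times V(H)$, with $(u,v)$ adjacent to $(x,y)$ iff $ux\in E(G)$ and $vy\in E(H)$. For a connected graph and an ordered set $W=\{w_1,\dots,w_k\}$ of vertices, $r(v\mid W)=(d(v,w_1),\dots,d(v,w_k))$; $W$ is resolving if distinct vertices have distinct representations; $\dim(G)$ is the minimum size of a resolving set. *)

(* Defs.v *)
(* finite simple graphs as symmetric irreflexive relations. *)
From mathcomp Require Import all_boot.
Set Implicit Arguments. Unset Strict Implicit. Unset Printing Implicit Defensive.

Definition complete_graph (r : nat) : rel 'I_r := fun x y => x != y.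
Arguments complete_graph r : clear implicits.

Definition tensor_graph (T1 T2 : finType) (e1 : rel T1) (e2 : rel T2)
  : rel (T1 * T2)%type := fun p q => e1 p.1 q.1 && e2 p.2 q.2.

Fixpoint walk (T : finType) (e : rel T) (k : nat) (a b : T) : bool :=
  match k with
  | 0 => a == b
  | k'.+1 => (a == b) || [exists c, e a c && walk e k' c b]
  end.

(* Graph distance: least k with a walk of length <= k (shortest paths in a
   connected graph have length < #|T|, so searching 0 .. #|T|-1 suffices). *)
Definition dist (T : finType) (e : rel T) (a b : T) : nat :=
  find (fun k => walk e k a b) (iota 0 #|T|).

Definition resolving (T : finType) (e : rel T) (W : {set T}) : bool :=
  [forall x, forall y, [forall w in W, dist e x w == dist e y w] ==> (x == y)].

Definition metric_dim (T : finType) (e : rel T) : nat :=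
  \big[minn/#|T|]_(W : {set T} | resolving e W) #|W|.

(* Main.v *)
Require Import Defs.
From mathcomp Require Import all_boot.
From mathcomp Require Import zify.

Lemma dist_cases (T : finType) (e : rel T) (a b : T) : 2 < #|T| ->
  dist e a b = if a == b then 0 else if e a b then 1
    else if [exists c, e a c && e c b] then 2 else dist e a b.
Proof.
rewrite /dist; case: #|T| => [|[|[|N]]] // _ /=.
case: eqP => //= ne.
have H1 : [exists c, e a c && (c == b)] = e a b.
  apply/existsP/idP => [[c /andP[h /eqP <-]] //|h].
  by exists b; rewrite h eqxx.
rewrite H1; case: (e a b) => //.
case: (boolP [exists c, e a c && e c b]) => // /existsP [c /andP [h1 h2]].
have -> : [exists c0, e a c0 && ((c0 == b) || [exists c1, e c0 c1 && (c1 == b)])] = true.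
  apply/existsP; exists c; rewrite h1 /=; apply/orP; right.
  by apply/existsP; exists b; rewrite h2 eqxx.
by [].
Qed.

Lemma two_avoid (T : finType) (a b : T) : 2 < #|T| -> exists k, (k != a) && (k != b).
Proof.
move=> H.
have : 0 < #|~: [set a; b]|.
  have := cardsCs [set a; b]; rewrite cards2.
  move: (#|T|) H (#|~: _|) => t H c.
  case: (a != b) => /= h; lia.
case/card_gt0P => k; rewrite !inE negb_or => h; by exists k.
Qed.

Section G.
Variables m n : nat.
Hypothesis Hm : 2 < m.
Hypothesis Hn : 2 < n.
Let e := tensor_graph (complete_graph m) (complete_graph n).

Lemma distG (x w : 'I_m * 'I_n) :
  dist e x w = if x == w then 0 else if (x.1 != w.1) && (x.2 != w.2) then 1 else 2.
Proof.
have HT : 2 < #|{: 'I_m * 'I_n}| by rewrite card_prod !card_ord; nia.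
rewrite dist_cases //.
case: eqP => // _.
have -> : e x w = (x.1 != w.1) && (x.2 != w.2) by [].
case: ifP => // _.
have [k /andP [k1 k2]] := @two_avoid _ x.1 w.1 (ltac:(by rewrite card_ord)).
have [l /andP [l1 l2]] := @two_avoid _ x.2 w.2 (ltac:(by rewrite card_ord)).
have -> : [exists c, e x c && e c w] = true.
  apply/existsP; exists (k, l).
  by rewrite /e /tensor_graph /complete_graph /= k2 l2 eq_sym k1 eq_sym l1.
by [].
Qed.

Lemma distG_eq (x y w : 'I_m * 'I_n) : dist e x w = dist e y w ->
  (x == w) = (y == w) /\
  ((x.1 == w.1) || (x.2 == w.2)) = ((y.1 == w.1) || (y.2 == w.2)).
Proof.
rewrite !distG -[(x.1 == w.1) || _]negbK negb_or -[(y.1 == w.1) || _]negbK negb_or.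
case: (eqVneq x w) => [->|nx]; case: (eqVneq y w) => [->|ny] //=;
  rewrite ?eqxx /=;
  by case: ((x.1 != w.1) && (x.2 != w.2)); case: ((y.1 != w.1) && (y.2 != w.2)).
Qed.

End G.

Lemma combin (M N I J I' J' : nat) : 3 <= M -> 2 * M - 2 <= N ->
  I < M -> I' < M -> J <= N -> J' <= N ->
  (forall b, b < N ->
     ((I == minn (b %/ 2) (M - 2)) || (J == b)) =
     ((I' == minn (b %/ 2) (M - 2)) || (J' == b)) /\
     ((I == minn (b %/ 2) (M - 2)) && (J == b)) =
     ((I' == minn (b %/ 2) (M - 2)) && (J' == b))) ->
  I = I' /\ J = J'.
Proof.
move=> HM HN HI HI' HJ HJ' Hb.
have key : forall I I' J', I < M -> I' < M -> J' <= N ->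
   (forall b, b < N -> I == minn (b %/ 2) (M - 2) ->
        (I' == minn (b %/ 2) (M - 2)) || (J' == b)) ->
   I <= M - 2 -> I' = I.
  move=> I0 I0' J0' h0 h0' hj h hI.
  have h1 := h (2 * I0) ltac:(lia) ltac:(apply/eqP; lia).
  have h2 := h (2 * I0 + 1) ltac:(lia) ltac:(apply/eqP; lia).
  by case/orP: h1 => /eqP h1; case/orP: h2 => /eqP h2; lia.
have EI : I = I'.
  case: (leqP I (M - 2)) => hI.
    apply/esym/(key I I' J') => // b hb ee.
    by have [<- _] := Hb b hb; rewrite ee.
  case: (leqP I' (M - 2)) => hI'.
    apply: (key I' I J) => // b hb ee.
    by have [-> _] := Hb b hb; rewrite ee.
  lia.
subst I'; split => //.
case: (ltnP J N) => hJ.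
  have [h1 h2] := Hb J hJ.
  rewrite eqxx orbT in h1.
  case/orP: (esym h1) => [ee|/eqP //].
  by rewrite ee eqxx /= in h2; apply/eqP; rewrite eq_sym -h2.
case: (ltnP J' N) => hJ'.
  have [h1 h2] := Hb J' hJ'.
  rewrite eqxx orbT in h1.
  case/orP: h1 => [ee|/eqP //].
  by rewrite ee eqxx /= in h2; apply/eqP.
lia.
Qed.

Lemma bigmin_le (I : eqType) (r : seq I) (P : pred I) (F : I -> nat) x z :
  z \in r -> P z -> \big[minn/x]_(i <- r | P i) F i <= F z.
Proof.
elim: r => [|a r IH] //=; rewrite in_cons big_cons => /orP [/eqP <- ->|hz hp].
  exact: geq_minl.
case: (P a); last exact: IH.
exact: leq_trans (geq_minr _ _) (IH hz hp).
Qed.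

Theorem proposition3p3 (m n : nat) :
  3 <= m -> 2 * m - 1 <= n ->
  metric_dim (tensor_graph (complete_graph m) (complete_graph n)) = n - 1.
Proof.
move=> Hm Hn.
have Hn2 : 2 < n by lia.
case: m Hm Hn => // m Hm Hn.
case: n Hn Hn2 => // n Hn Hn2.
rewrite subn1 /=.
set e := tensor_graph _ _.
apply/eqP; rewrite eqn_leq; apply/andP; split.
- pose W0 : {set 'I_m.+1 * 'I_n.+1} :=
    [set w : 'I_m.+1 * 'I_n.+1 | (w.2 < n) && (val w.1 == minn (w.2 %/ 2) (m.+1 - 2))].
  have HW : resolving e W0.
    apply/forallP => -[i j]; apply/forallP => -[i' j'].
    apply/implyP => /forall_inP H.
    rewrite xpair_eqE -!val_eqE.
    suff [-> ->] : val i = val i' /\ val j = val j' by rewrite !eqxx.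
    apply: (@combin m.+1 n (val i) (val j) (val i') (val j')) => //; try lia.
    + exact: ltn_ord.
    + exact: ltn_ord.
    + by rewrite -ltnS; exact: ltn_ord.
    + by rewrite -ltnS; exact: ltn_ord.
    move=> b hb.
    have hr : minn (b %/ 2) (m.+1 - 2) < m.+1 by lia.
    have hw : (inord (minn (b %/ 2) (m.+1 - 2)), inord b) \in W0.
      by rewrite inE /= !inordK ?eqxx ?andbT //; lia.
    have [h1 h2] := @distG_eq _ _ Hm Hn2 _ _ _ (eqP (H _ hw)).
    rewrite /= !xpair_eqE /= -!val_eqE /= !inordK // in h1 h2; last lia.
  have HC : #|W0| <= n.
    rewrite -(@card_in_imset _ _ snd).
      rewrite -[n]/(n.+1.-1) -[in X in _ <= X](card_ord n.+1) -(cardsC1 (ord_max : 'I_n.+1)).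
      apply: subset_leq_card; apply/subsetP => b /imsetP [w].
      rewrite inE => /andP [hw _] ->; rewrite !inE -val_eqE /=; lia.
    move=> [a1 b1] [a2 b2]; rewrite !inE /= => /andP [_ /eqP e1] /andP [_ /eqP e2] eb.
    subst b2; congr pair; apply: val_inj; exact: (etrans e1 (esym e2)).
  rewrite /metric_dim.
  exact: leq_trans (@bigmin_le _ _ (resolving e) (fun W => #|W|) _ _ (mem_index_enum W0) HW) HC.
- rewrite /metric_dim; elim/big_ind: _ => //.
  + by rewrite card_prod !card_ord; nia.
  + by move=> x y hx hy; rewrite leq_min hx hy.
  move=> W HW; rewrite leqNgt; apply/negP => Hlt.
  set C := [set w.2 | w in W].
  have HCc : #|C| <= #|W| by apply: leq_imset_card.
  have : 1 < #|~: C|.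
    have := cardsCs C; rewrite card_ord.
    move: (#|C|) (#|~: C|) HCc => c d HCc; lia.
  case/card_gt1P => j1 [j2 [hj1 hj2 hne]].
  move/forallP: HW => /(_ (ord0, j1)) /forallP /(_ (ord0, j2)) /implyP.
  have -> : [forall (w | w \in W), dist e (ord0, j1) w == dist e (ord0, j2) w].
    apply/forall_inP => w hw.
    have hw2 : w.2 \in C by apply/imsetP; exists w.
    rewrite !(@distG _ _ Hm Hn2).
    have h1 : j1 != w.2 by apply: (contraTneq _ hw2) => <-; move: hj1; rewrite inE.
    have h2 : j2 != w.2 by apply: (contraTneq _ hw2) => <-; move: hj2; rewrite inE.
    have n1 : (ord0, j1) != w by apply/eqP => ee; move/eqP: h1; apply; rewrite -ee.
    have n2 : (ord0, j2) != w by apply/eqP => ee; move/eqP: h2; apply; rewrite -ee.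
    rewrite (negbTE n1) (negbTE n2) h1 h2.
    by [].
  by move=> /(_ isT); rewrite xpair_eqE (negbTE hne) andbF.
Qed.
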